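(* Let $n\ge 1$, $k\ge 2$, and consider the tensor-based HPDS $\dot{\mathbf x}(t)=\mathscr A\mathbf x(t)^{k-1}$ with unknown almost symmetric $\mathscr A\in\mathbb R^{n\times\cdots\times n}$ ($k$ modes). Let $\mathbf X_0,\mathbf X_1\in\mathbb R^{n\times T}$ be the sampled state and state-derivative data matrices, and $\hat{\mathbf X}_0=\mathbf X_0\odot\mathbf X_0\odot\cdots\odot\mathbf X_0$ ($k-1$ factors). Then the data $(\mathbf X_0,\mathbf X_1)$ determine $\mathscr A$ uniquely (i.e. there is exactly one almost symmetric tensor $\mathscr A$ with $\mathbf A_{(k)}\hat{\mathbf X}_0=\mathbf X_1$) if and only if $$\mathrm{rank}(\hat{\mathbf X}_0)=\sum_{j=1}^{\min\{n,k-1\}}\frac{n!}{j!(n-j)!}\cdot\frac{(k-2)!}{(j-1)!(k-j-1)!}.$$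
   Context: A cubical $k$th-order tensor $\mathscr A\in\mathbb R^{n\times\cdots\times n}$ is almost symmetric if its entries $\mathscr A_{j_1\cdots j_k}$ are invariant under every permutation of the first $k-1$ indices $j_1,\dots,j_{k-1}$. The $k$-mode matricization $\mathbf A_{(k)}\in\mathbb R^{n\times n^{k-1}}$ is defined by $(\mathbf A_{(k)})_{j_k,c}=\mathscr A_{j_1\cdots j_k}$ with $c=j_1+\sum_{i=2}^{k-1}(j_i-1)n^{i-1}$. For $\mathbf x\in\mathbb R^n$, $\mathscr A\mathbf x^{k-1}:=\mathscr A\times_1\mathbf x\times_2\cdots\times_{k-1}\mathbf x\in\mathbb R^n$ (contraction of the first $k-1$ modes with $\mathbf x$), which equals $\mathbf A_{(k)}\mathbf x^{[k-1]}$ where $\mathbf x^{[k-1]}=\mathbf x\otimes\cdots\otimes\mathbf x$ ($k-1$ factors) is the Kronecker power. The Khatri–Rao product of $\mathbf A\in\mathbb R^{n\times s}$ and $\mathbf B\in\mathbb R^{m\times s}$ is $\mathbf A\odot\mathbf B=[\mathbf a_1\otimes\mathbf b_1,\dots,\mathbf a_s\otimes\mathbf b_s]$ (columnwise Kronecker product). Data: $\mathbf X_0=[\mathbf x(t_0),\mathbf x(t_0+\tau),\dots,\mathbf x(t_0+(T-1)\tau)]$, $\mathbf X_1=[\dot{\mathbf x}(t_0),\dots,\dot{\mathbf x}(t_0+(T-1)\tau)]$ for a trajectory of the system, with sampling time $\tau>0$, so that $\mathbf X_1=\mathbf A_{(k)}\hat{\mathbf X}_0$. *)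

(* Defs.v *)
From HB Require Import structures.
From mathcomp Require Import all_boot all_order all_algebra all_fingroup.
Set Implicit Arguments. Unset Strict Implicit. Unset Printing Implicit Defensive.
Import Order.TTheory GRing.Theory Num.Theory.
Local Open Scope ring_scope.

(* A cubical k-th order tensor in R^{n x ... x n}: entries indexed by
   multi-indices f : 'I_k -> 'I_n (0-based; mode i has index f i). *)
Definition tensor (R : Type) (n k : nat) := {ffun {ffun 'I_k -> 'I_n} -> R}.

(* Almost symmetric: invariant under every permutation of the first k-1
   modes, i.e. every permutation of 'I_k fixing the last mode k-1. *)
Definition almost_symmetric (R : Type) (n k : nat) (A : tensor R n k) : Prop :=
  forall (s : 'S_k) (f : {ffun 'I_k -> 'I_n}),
    (forall i : 'I_k, val i = k.-1 -> s i = i) ->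
    A [ffun i => f (s i)] = A f.

(* 0-based column index c = j_1 + sum_{i=2}^{k-1} (j_i - 1) n^{i-1}. *)
Definition col_code (n k : nat) (f : {ffun 'I_k -> 'I_n}) : nat :=
  (\sum_(i < k | (val i < k.-1)%N) f i * n ^ val i)%N.

(* k-mode matricization A_(k) in R^{n x n^{k-1}}:
   (A_(k))_{j_k, c} = A_{j_1 ... j_k}. The sum has exactly one term
   (the multi-index with last entry j and column code c). *)
Definition matricize (R : nzRingType) (n k : nat) (A : tensor R n k)
  : 'M[R]_(n, n ^ k.-1) :=
  \matrix_(j < n, c < n ^ k.-1)
    \sum_(f : {ffun 'I_k -> 'I_n} |
          [forall i : 'I_k, (val i == k.-1) ==> (f i == j)]
          && (col_code f == val c)) A f.

(* Khatri-Rao (columnwise Kronecker) product: column t is a_t (x) b_t,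
   (a (x) b)_{a*m + b} = a_a b_b (0-based). *)
Definition khatri_rao (R : nzRingType) (n m s : nat)
  (A : 'M[R]_(n, s)) (B : 'M[R]_(m, s)) : 'M[R]_(n * m, s) :=
  \matrix_(i < n * m, t < s)
    \sum_(a < n) \sum_(b < m) ((val i == a * m + b)%N)%:R * (A a t * B b t).

Fixpoint khatri_rao_pow (R : nzRingType) (n s : nat) (X : 'M[R]_(n, s)) (p : nat)
  : 'M[R]_(n ^ p, s) :=
  match p as p0 return 'M[R]_(n ^ p0, s) with
  | 0 => castmx (esym (expn0 n), erefl s) (const_mx 1 : 'M[R]_(1, s))
  | p'.+1 => castmx (esym (expnS n p'), erefl s) (khatri_rao X (khatri_rao_pow X p'))
  end.

(* Main.v *)
Require Import Defs.
From HB Require Import structures.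
From mathcomp Require Import all_boot all_order all_algebra all_fingroup.
Set Implicit Arguments. Unset Strict Implicit. Unset Printing Implicit Defensive.
Import Order.TTheory GRing.Theory Num.Theory.

Section Digits.
Variable n : nat.
Hypothesis n_gt0 : 0 < n.

Definition digit (i c : nat) := (c %% n ^ i.+1) %/ n ^ i.

Lemma expn_gt0' i : 0 < n ^ i.
Proof. by rewrite expn_gt0 n_gt0. Qed.

Lemma digit_lt i c : digit i c < n.
Proof.
rewrite /digit ltn_divLR ?expn_gt0' // -expnS.
by rewrite ltn_pmod ?expn_gt0'.
Qed.

Lemma sum_digits r c : \sum_(i < r) digit i c * n ^ i = c %% n ^ r.
Proof.
elim: r => [|r IH]; first by rewrite big_ord0 expn0 modn1.
rewrite big_ord_recr /= IH /digit.
have -> : c %% n ^ r = (c %% n ^ r.+1) %% n ^ r.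
  by rewrite modn_dvdm // dvdn_exp2l.
by rewrite addnC -divn_eq.
Qed.

Lemma digit_mod i r c : i < r -> digit i (c %% n ^ r) = digit i c.
Proof.
move=> ir; rewrite /digit modn_dvdm // dvdn_exp2l //.
Qed.

Lemma digit_top r c : c < n ^ r.+1 -> digit r c = c %/ n ^ r.
Proof. by move=> h; rewrite /digit modn_small. Qed.

Variable g : nat -> nat.
Hypothesis g_lt : forall i, g i < n.

Lemma sum_lt r : \sum_(i < r) g i * n ^ i < n ^ r.
Proof.
elim: r => [|r IH]; first by rewrite big_ord0 expn0.
rewrite big_ord_recr /= expnSr.
have : g r * n ^ r <= (n.-1) * n ^ r.
  by rewrite leq_mul2r -ltnS prednK // g_lt orbT.
move=> h; apply: (@leq_trans (n ^ r + n.-1 * n ^ r)).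
  by rewrite -addSn leq_add.
by rewrite -{1}(mul1n (n ^ r)) -mulnDl add1n prednK // mulnC.
Qed.

Lemma sum_mod i r : i < r ->
  (\sum_(j < r) g j * n ^ j) %% n ^ i.+1 = \sum_(j < i.+1) g j * n ^ j.
Proof.
elim: r => [//|r IH]; rewrite ltnS leq_eqVlt => /orP [/eqP ->|ir].
  by rewrite modn_small // sum_lt.
rewrite big_ord_recr /= -modnDm.
have -> : g r * n ^ r %% n ^ i.+1 = 0.
  by apply/eqP; rewrite -/(dvdn _ _) dvdn_mull // dvdn_exp2l.
by rewrite addn0 modn_mod IH.
Qed.

Lemma digit_sum i r : i < r -> digit i (\sum_(j < r) g j * n ^ j) = g i.
Proof.
move=> ir; rewrite /digit sum_mod // big_ord_recr /=.
rewrite divnDMl ?expn_gt0' // divn_small ?sum_lt //.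
Qed.
End Digits.
Local Open Scope ring_scope.

Lemma kpow_entry (R : comNzRingType) m s (X : 'M[R]_(m.+1, s)) r
  (c : 'I_(m.+1 ^ r)) t :
  khatri_rao_pow X r c t = \prod_(i < r) X (inord (digit m.+1 i c)%N) t.
Proof.
elim: r c => [|r IH] c /=.
  by rewrite castmxE /= mxE big_ord0.
rewrite castmxE /= /khatri_rao mxE /=.
set N := (m.+1 ^ r)%N.
have N0 : (0 < N)%N by rewrite expn_gt0.
have cl : (c < m.+1 * N)%N by rewrite -expnS.
have al : (c %/ N < m.+1)%N by rewrite ltn_divLR.
have bl : (c %% N < N)%N by rewrite ltn_pmod.
pose a0 : 'I_m.+1 := Ordinal al.
pose b0 : 'I_N := Ordinal bl.
rewrite (bigD1 a0) //= (bigD1 b0) //=.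
rewrite -divn_eq eqxx mul1r.
rewrite [X in _ + X]big1; last first.
  move=> a na; rewrite big1 // => b _.
  case: eqP => [e|]; last by rewrite mul0r.
  exfalso; move: na; rewrite -(inj_eq val_inj) /= e.
  by rewrite divnMDl // divn_small // addn0 eqxx.
rewrite big1 ?addr0; last first.
  move=> b nb; case: eqP => [e|]; last by rewrite mul0r.
  exfalso; move: nb; rewrite -(inj_eq val_inj) /=.
  by rewrite e modnMDl modn_small // eqxx.
rewrite !cast_ord_id IH big_ord_recr /= mulrC; congr (_ * _).
  apply: eq_bigr => i _; congr (X _ t); apply: val_inj => /=.
  by rewrite digit_mod.
congr (X _ t); apply: val_inj => /=; rewrite digit_top // inordK //.
Qed.
Local Close Scope ring_scope.
Section Main.
Variables (m p : nat).
Local Notation n := m.+1.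
Local Notation q := p.+1.
Local Notation k := p.+2.

Definition rI : rel 'I_n := fun x y => (x <= y)%N.
Lemma rI_total : total rI. Proof. by move=> x y; apply: leq_total. Qed.
Lemma rI_trans : transitive rI. Proof. by move=> x y z; apply: leq_trans. Qed.
Lemma rI_anti : antisymmetric rI.
Proof. by move=> x y /anti_leq /val_inj. Qed.

Definition dgt (c : nat) : q.-tuple 'I_n := [tuple inord (digit n i c) | i < q].
Definition code (t : q.-tuple 'I_n) : nat := \sum_(i < q) tnth t i * n ^ i.

Lemma code_g (t : q.-tuple 'I_n) :
  code t = \sum_(i < q) (fun j => nat_of_ord (tnth t (inord j))) i * n ^ i.
Proof. by apply: eq_bigr => i _; rewrite inord_val. Qed.

Lemma code_lt t : (code t < n ^ q)%N.
Proof. rewrite code_g; exact: (@sum_lt n (ltn0Sn m) (fun j => nat_of_ord (tnth t (inord j))) (fun j => ltn_ord _) q). Qed.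

Lemma dgt_code t : dgt (code t) = t.
Proof.
apply: eq_from_tnth => i; rewrite tnth_mktuple; apply: val_inj => /=.
rewrite code_g inordK; last by apply: digit_lt.
by rewrite (@digit_sum n (ltn0Sn m) (fun j => nat_of_ord (tnth t (inord j))) (fun j => ltn_ord _)) ?inord_val.
Qed.

Lemma code_dgt c : code (dgt c) = c %% n ^ q.
Proof.
rewrite /code -sum_digits; apply: eq_bigr => i _.
by rewrite tnth_mktuple inordK //; apply: digit_lt.
Qed.

Definition mk (j : 'I_n) (t : q.-tuple 'I_n) : {ffun 'I_k -> 'I_n} :=
  [ffun i => if unlift ord_max i is Some i' then tnth t i' else j].
Definition fp (f : {ffun 'I_k -> 'I_n}) : q.-tuple 'I_n :=
  [tuple f (lift ord_max i) | i < q].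

Lemma fp_mk j t : fp (mk j t) = t.
Proof. by apply: eq_from_tnth => i; rewrite tnth_mktuple ffunE liftK. Qed.

Lemma mk_fp (f : {ffun 'I_k -> 'I_n}) : mk (f ord_max) (fp f) = f.
Proof.
apply/ffunP => i; rewrite ffunE.
by case: unliftP => [i'|] -> //; rewrite tnth_mktuple.
Qed.

Lemma mk_last j t : mk j t ord_max = j.
Proof. by rewrite ffunE unlift_none. Qed.

Lemma col_code_fp (f : {ffun 'I_k -> 'I_n}) : col_code f = code (fp f).
Proof.
rewrite /col_code /code big_mkcond big_ord_recr /= ltnn addn0.
apply: eq_bigr => i _; rewrite ltn_ord tnth_mktuple; congr (f _ * _)%N.
by apply: val_inj; rewrite /= /bump leqNgt ltn_ord.
Qed.

Definition Gam := {t : q.-tuple 'I_n | sorted rI t}.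
Definition clsT (t : q.-tuple 'I_n) : Gam :=
  exist _ (sort_tuple rI t) (sort_sorted rI_total t).
Definition cls (c : nat) : Gam := clsT (dgt c).
Definition rep (g : Gam) : 'I_(n ^ q) := Ordinal (code_lt (val g)).

Lemma clsT_eq t t' : (clsT t == clsT t') = perm_eq t t'.
Proof.
apply/eqP/idP => [e|e].
  apply/(perm_sortP rI_total rI_trans rI_anti).
  by move/(congr1 (fun g => val (val g))): e.
apply: val_inj; apply: val_inj => /=.
exact/(perm_sortP rI_total rI_trans rI_anti).
Qed.

Lemma cls_rep g : cls (rep g) = g.
Proof.
apply: val_inj; apply: val_inj.
change (sort rI (dgt (code (sval g))) = sval g); rewrite dgt_code.
by apply: sorted_sort; [apply: rI_trans | apply: (svalP g)].
Qed.


Lemma card_Gam :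
  #|{:Gam}| = (\sum_(1 <= j < (minn n q).+1) 'C(n, j) * 'C(p, j.-1))%N.
Proof.
rewrite card_sig.
have -> : #|[pred x : q.-tuple 'I_n | sorted rI x]|
        = #|[set t : q.-tuple 'I_m.+1 | sorted leq (map val t)]|.
  by apply: eq_card => t; rewrite !inE sorted_map.
rewrite card_sorted_tuples.
have -> : (q + m = n + p)%N by rewrite !addSn addnC.
rewrite -mathcomp.boot.binomial.Vandermonde -(big_mkord xpredT (fun j => 'C(n, j) * 'C(p, q - j))%N).
rewrite big_ltn // subn0 (bin_small (ltnSn p)) muln0 add0n.
rewrite (eq_big_nat _ _ (F2 := fun j => 'C(n, j) * 'C(p, j.-1))%N); last first.
  move=> j /andP [j1 jq]; congr (_ * _)%N.
  case: j j1 jq => // j _ jq; rewrite subSS /= -(bin_sub (m := j)) //.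
case: (leqP n q) => h.
  rewrite (@big_cat_nat _ _ _ n.+1 1 q.+1) //=.
  rewrite -[RHS]addn0; congr (_ + _)%N.
  rewrite big_nat_cond big1 // => j /andP [/andP [hj _] _].
  by rewrite bin_small.
by [].
Qed.

Section Ring.
Variable R : realFieldType.
Variable T : nat.
Variable X0 : 'M[R]_(n, T).
Local Open Scope ring_scope.

Definition Kmat := khatri_rao_pow X0 q.

Lemma K_entry (c : 'I_(n ^ q)) t :
  Kmat c t = \prod_(i < q) X0 (tnth (dgt c) i) t.
Proof.
rewrite /Kmat kpow_entry; apply: eq_bigr => i _; by rewrite tnth_mktuple.
Qed.

Lemma K_cls (c c' : 'I_(n ^ q)) t : cls c = cls c' -> Kmat c t = Kmat c' t.
Proof.
move/eqP; rewrite clsT_eq => e.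
rewrite !K_entry -(big_tuple _ _ (dgt c) predT (fun x => X0 x t)).
rewrite -(big_tuple _ _ (dgt c') predT (fun x => X0 x t)).
exact: perm_big.
Qed.

Lemma K_rep (c : 'I_(n ^ q)) t : Kmat c t = Kmat (rep (cls c)) t.
Proof. by apply: K_cls; rewrite cls_rep. Qed.


Lemma Phi_entry (A : tensor R n k) j (c : 'I_(n ^ q)) :
  matricize A j c = A (mk j (dgt c)).
Proof.
rewrite mxE (bigD1 (mk j (dgt c))) /=; last first.
  apply/andP; split.
  - apply/forallP => i; apply/implyP => /eqP hi.
    have -> : i = ord_max by apply: val_inj.
    by rewrite mk_last.
  - by rewrite col_code_fp fp_mk code_dgt modn_small.
rewrite big1 ?addr0 // => f /andP [/andP [/forallP hf /eqP hc] nf].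
exfalso; move/eqP: nf; apply.
have hj : f ord_max = j.
  by have := hf ord_max; rewrite /= eqxx /= => /eqP.
rewrite -(mk_fp f) hj; congr mk.
by rewrite -(dgt_code (fp f)) -col_code_fp hc.
Qed.

Lemma sym_perm (A : tensor R n k) j (t t' : q.-tuple 'I_n) :
  almost_symmetric A -> perm_eq t t' -> A (mk j t) = A (mk j t').
Proof.
move=> hA /tuple_permP [s hs].
pose sg := lift_perm ord_max ord_max s.
have -> : mk j t = [ffun i => mk j t' (sg i)].
  apply/ffunP => i; rewrite /mk !ffunE.
  case: unliftP => [i'|] ->.
    rewrite lift_perm_lift !liftK.
    have -> : t = [tuple tnth t' (s i) | i < q] by apply: val_inj.
    by rewrite tnth_mktuple.
  by rewrite lift_perm_id !unlift_none.
apply: hA => i hi; have -> : i = ord_max by apply: val_inj.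
by rewrite lift_perm_id.
Qed.

Lemma fp_perm (s : 'S_k) (f : {ffun 'I_k -> 'I_n}) :
  s ord_max = ord_max -> perm_eq (fp [ffun i => f (s i)]) (fp f).
Proof.
move=> hs.
have hl i : unlift ord_max (s (lift ord_max i)) != None.
  case: unliftP => // e; exfalso.
  have : lift ord_max i = ord_max by apply: (@perm_inj _ s); rewrite e hs.
  by apply/eqP; rewrite eq_sym neq_lift.
pose sf i := odflt i (unlift ord_max (s (lift ord_max i))).
have hsf i : lift ord_max (sf i) = s (lift ord_max i).
  by rewrite /sf; move: (hl i); case: unliftP.
have sf_inj : injective sf.
  move=> i1 i2 e; apply: (@lift_inj _ ord_max); apply: (@perm_inj _ s).
  by rewrite -!hsf e.
apply/tuple_permP; exists (perm sf_inj).
congr (tval _); apply: eq_from_tnth => i.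
by rewrite !tnth_mktuple ffunE permE -hsf.
Qed.

Definition build (U : 'I_n -> Gam -> R) : tensor R n k :=
  [ffun f : {ffun 'I_k -> 'I_n} => U (f ord_max) (clsT (fp f))].

Lemma build_sym U : almost_symmetric (build U).
Proof.
move=> s f hs; rewrite !ffunE.
have hm : s ord_max = ord_max by apply: hs.
rewrite hm; congr U; apply/eqP; rewrite clsT_eq; exact: fp_perm.
Qed.

Lemma build_Phi U j (c : 'I_(n ^ q)) : matricize (build U) j c = U j (cls c).
Proof. by rewrite Phi_entry ffunE mk_last fp_mk. Qed.

Lemma Phi_cls (A : tensor R n k) j (c : 'I_(n ^ q)) : almost_symmetric A ->
  matricize A j c = matricize A j (rep (cls c)).
Proof.
move=> hA; rewrite !Phi_entry; apply: sym_perm => //; rewrite -clsT_eq.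
by apply/eqP; exact: (esym (cls_rep (cls c))).
Qed.

Lemma Phi_zero (A : tensor R n k) :
  (forall j (c : 'I_(n ^ q)), matricize A j c = 0) -> forall f, A f = 0.
Proof.
move=> h f; rewrite -(mk_fp f) -(dgt_code (fp f)).
by have := h (f ord_max) (Ordinal (code_lt (fp f))); rewrite Phi_entry.
Qed.

Definition sz (g : Gam) := #|[pred c : 'I_(n ^ q) | cls c == g]|.

Lemma sz_gt0 g : (0 < sz g)%N.
Proof. by apply/card_gt0P; exists (rep g); rewrite inE /= cls_rep. Qed.

Definition Kp : 'M[R]_(#|{:Gam}|, T) := \matrix_(a, t) Kmat (rep (enum_val a)) t.

Lemma SUM (v : 'I_(n ^ q) -> R) t : (forall c, v c = v (rep (cls c))) ->
  \sum_c v c * Kmat c t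
  = \sum_a (sz (enum_val a))%:R * v (rep (enum_val a)) * Kp a t.
Proof.
move=> hv.
transitivity (\sum_(c : 'I_(n ^ q)) (fun g => v (rep g) * Kmat (rep g) t) (cls c)).
  by apply: eq_bigr => c _; rewrite {1}hv K_rep.
rewrite (@partition_big _ _ _ _ _ _ predT (fun c : 'I_(n ^ q) => cls c) predT) //=.
rewrite (reindex enum_val (onW_bij _ (enum_val_bij _))).
apply: eq_bigr => a _.
rewrite (eq_bigr (fun _ => v (rep (enum_val a)) * Kmat (rep (enum_val a)) t));
  last by move=> c /eqP ->.
rewrite sumr_const mxE -mulrA mulr_natl.
by congr (_ *+ _); apply: eq_card => c; rewrite inE.
Qed.

Lemma K_eq_PKp :
  Kmat = (\matrix_(c < n ^ q, a < #|{:Gam}|) ((enum_rank (cls c) == a)%:R : R)) *m Kp.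
Proof.
apply/matrixP => c t; rewrite !mxE (bigD1 (enum_rank (cls c))) //= big1 => [|a na].
  by rewrite !mxE eqxx mul1r enum_rankK addr0 -K_rep.
by rewrite mxE eq_sym (negbTE na) mul0r.
Qed.

Lemma rank_eq : \rank Kmat = \rank Kp.
Proof.
apply/eqP; rewrite eqn_leq; apply/andP; split.
  by rewrite {1}K_eq_PKp mxrankM_maxr.
have -> : Kp = rowsub (fun a => rep (enum_val a)) Kmat.
  by apply/matrixP => a t; rewrite !mxE.
by rewrite rowsubE mxrankM_maxr.
Qed.

Lemma uniq_of_rank (A B : tensor R n k) X1 : \rank Kmat = #|{:Gam}| ->
  almost_symmetric A -> almost_symmetric B ->
  matricize A *m Kmat = X1 -> matricize B *m Kmat = X1 -> A = B.
Proof.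
move=> hr hA hB eA eB.
pose D : tensor R n k := [ffun f => A f - B f].
have hD : almost_symmetric D by move=> s f hs; rewrite !ffunE hA ?hB.
have PD j (c : 'I_(n ^ q)) : matricize D j c = matricize A j c - matricize B j c.
  by rewrite !Phi_entry !ffunE.
suff h : forall j (c : 'I_(n ^ q)), matricize D j c = 0.
  apply/ffunP => f; apply/eqP; rewrite -subr_eq0.
  by have := Phi_zero h f; rewrite ffunE => ->.
move=> j c.
have rf : row_free Kp by rewrite /row_free -rank_eq hr.
pose v (c : 'I_(n ^ q)) := matricize D j c.
have hv c' : v c' = v (rep (cls c')) by apply: Phi_cls.
pose w : 'rV[R]_#|{:Gam}| := \row_a ((sz (enum_val a))%:R * v (rep (enum_val a))).
have w0 : w = 0.
  apply: (row_free_inj rf); rewrite mul0mx; apply/matrixP => i t; rewrite !mxE.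
  rewrite (eq_bigr (fun a => (sz (enum_val a))%:R * v (rep (enum_val a)) * Kp a t));
    last by move=> a _; rewrite mxE.
  rewrite -SUM //.
  transitivity ((matricize A *m Kmat - matricize B *m Kmat) j t).
    rewrite !mxE -sumrB; apply: eq_bigr => c' _; by rewrite /v PD mulrBl.
  by rewrite eA eB subrr mxE.
suff hc : v c = 0 by exact hc.
have := congr1 (fun M : 'rV[R]_#|{:Gam}| => M 0 (enum_rank (cls c))) w0.
rewrite !mxE enum_rankK -hv => /eqP; rewrite mulf_eq0 pnatr_eq0.
by rewrite (negbTE (lt0n_neq0 (sz_gt0 _))) /= => /eqP.
Qed.

Lemma nonuniq (A0 : tensor R n k) X1 : almost_symmetric A0 ->
  matricize A0 *m Kmat = X1 -> \rank Kmat != #|{:Gam}| ->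
  exists A1 : tensor R n k,
    [/\ almost_symmetric A1, matricize A1 *m Kmat = X1 & A1 != A0].
Proof.
move=> hA0 e hr.
have lt : (\rank Kp < #|{:Gam}|)%N by rewrite ltn_neqAle rank_leq_row andbT -rank_eq.
have kn : kermx Kp != 0.
  apply/eqP => h; move: (mxrank_ker Kp); rewrite h mxrank0 => /esym/eqP.
  by rewrite subn_eq0 leqNgt lt.
have [a0 wn] : exists a0, row a0 (kermx Kp) != 0.
  case: (pickP (fun a => row a (kermx Kp) != 0)) => [a ha|h]; first by exists a.
  exfalso; move/eqP: kn; apply; apply/row_matrixP => a; rewrite row0.
  by apply/eqP; move/negbFE: (h a).
set w := row a0 (kermx Kp).
have wK : w *m Kp = 0 by rewrite -row_mul mulmx_ker row0.
have [b wb] : exists b, w 0 b != 0.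
  case: (pickP (fun b => w 0 b != 0)) => [b hb|h]; first by exists b.
  exfalso; move/eqP: wn; apply; apply/rowP => b; rewrite [RHS]mxE.
  by apply/eqP; move/negbFE: (h b).
pose U (j : 'I_n) (g : Gam) := w 0 (enum_rank g) / (sz g)%:R.
pose A' := build U.
pose A1 : tensor R n k := [ffun f => A0 f + A' f].
have PA' j t : (matricize A' *m Kmat) j t = 0.
  rewrite mxE (eq_bigr (fun c : 'I_(n ^ q) => U j (cls c) * Kmat c t)) => [|c _]; last first.
    by rewrite build_Phi.
  rewrite SUM => [|c]; last by rewrite cls_rep.
  transitivity ((w *m Kp) 0 t); last by rewrite wK mxE.
  rewrite mxE; apply: eq_bigr => a _; rewrite /U cls_rep enum_valK mulrCA divff ?mulr1 //.
  by rewrite pnatr_eq0 -lt0n sz_gt0.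
exists A1; split.
- move=> s f hs; have := @build_sym U s f hs.
  by rewrite /A1 !ffunE (hA0 s f hs) => ->.
- have -> : matricize A1 = matricize A0 + matricize A'.
    by apply/matrixP => j c; rewrite [RHS]mxE !Phi_entry ffunE.
  by rewrite mulmxDl e; apply/matrixP => j t; rewrite mxE PA' addr0.
- apply/eqP => h.
  move: (congr1 (fun F : tensor R n k => F (mk ord0 (dgt (rep (enum_val b))))) h).
  have hc : clsT (dgt (rep (enum_val b))) = enum_val b := cls_rep _.
  rewrite /A1 /A' /build !ffunE fp_mk hc /U enum_valK => /eqP.
  rewrite -subr_eq0 addrAC subrr add0r mulf_eq0 invr_eq0 pnatr_eq0 (negbTE wb) /=.
  by rewrite (negbTE (lt0n_neq0 (sz_gt0 _))).
Qed.
End Ring.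
End Main.

Local Open Scope ring_scope.

Theorem mainTheorem1 (R : realFieldType) (n k T : nat)
  (X0 X1 : 'M[R]_(n, T)) :
  (1 <= n)%N -> (2 <= k)%N ->
  (* the data come from the system with some (true) almost symmetric tensor *)
  (exists A0 : tensor R n k,
      almost_symmetric A0 /\ matricize A0 *m khatri_rao_pow X0 k.-1 = X1) ->
  ((exists! A : tensor R n k,
      almost_symmetric A /\ matricize A *m khatri_rao_pow X0 k.-1 = X1)
   <->
   \rank (khatri_rao_pow X0 k.-1)
     = (\sum_(1 <= j < (minn n k.-1).+1) 'C(n, j) * 'C(k.-2, j.-1))%N).
Proof.
move=> hn hk [A0 [hA0 e]].
case: n X0 X1 A0 hA0 e hn => [//|m] X0 X1 A0 hA0 e _.
case: k A0 hA0 e hk => [//|[//|p]] A0 hA0 e _.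
rewrite -(card_Gam m p).
split.
- move=> [A [[hA eA] hu]]; apply/eqP; apply: contraT => hr.
  have [A1 [h1 e1 n1]] := nonuniq hA0 e hr.
  by move: n1; rewrite -(hu A1 (conj h1 e1)) -(hu A0 (conj hA0 e)) eqxx.
- move=> hr; exists A0; split; first by [].
  move=> A [hA eA]; exact: (uniq_of_rank hr hA0 hA e eA).
Qed.
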